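(* In $2\times2\times3$ Abalone, let $C1$ be the constellation with Black marbles on $c,f,g$ and Gray marbles on $a,d,h$; let $C2$ have Black on $c,f,g$ and Gray on $a,d,e$; let $C3$ have Black on $c,f,g$ and Gray on $d,e,h$. If $C$ is any constellation obtained from $C1$ by a single legal Gray move and $C$ is isomorphic to neither $C2$ nor $C3$, then Black, moving next from $C$, can force a win.
   Context: The $2\times2\times3$ board has 10 hexagonal cells in three vertical columns of sizes 3, 4, 3. In axial coordinates (cells adjacent when differing by $\pm(0,1),\pm(1,0),\pm(1,-1)$) the cells are $a=(0,0)$, $b=(0,1)$, $c=(0,2)$ (left column, bottom to top), $d=(1,-1)$, $e=(1,0)$, $f=(1,1)$, $g=(1,2)$ (middle column, bottom to top), $h=(2,-1)$, $i=(2,0)$, $j=(2,1)$ (right column, bottom to top). Its maximal lines are $a$-$b$-$c$, $d$-$e$-$f$-$g$, $h$-$i$-$j$, $a$-$e$-$i$, $b$-$f$-$j$, $c$-$g$, $d$-$h$, $a$-$d$, $b$-$e$-$h$, $c$-$f$-$i$, $g$-$j$; adjacent cells are consecutive cells of these lines. A constellation assigns each cell black, gray or empty; each player has 3 marbles. Black (Left) and Gray (Right) alternate turns. On a turn a player moves 1, 2 or 3 of their own marbles occupying consecutive cells of a line, one step in one of the six lattice directions. Broadside move (direction not parallel to the group's line, or a single marble): each moved marble must land on an empty board cell. In-line move (direction parallel to the line, group of $k$ marbles): if the cell $X$ beyond the front marble is an empty board cell the group advances; if $X$ holds opponent marbles, forming $m$ consecutive opponent marbles in that direction, the push is legal only if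 $m<k$ and the cell after them is empty or off the board, and then all shift one step, an opponent marble leaving the board being removed; moves with $X$ off the board or holding an own marble are illegal, and one may never move one's own marble off the board. The game ends as soon as one marble is pushed off, the pusher winning; never-ending play is a draw. A player can force a win from a constellation with a given player to move if they have a strategy guaranteeing a push-off in finitely many moves against all opponent play. The symmetries of this board are the identity, the left-right reflection ($a\leftrightarrow h$, $b\leftrightarrow i$, $c\leftrightarrow j$, middle column fixed), the top-bottom reflection ($a\leftrightarrow c$, $d\leftrightarrow g$, $e\leftrightarrow f$, $h\leftrightarrow j$, $b,i$ fixed), and their composition; two constellations are isomorphic if a symmetry maps one onto the other. *)

(* Defs.v *)
From Stdlib Require Import ZArith List Bool.
Import ListNotations.
Open Scope Z_scope.

Inductive cell := ca | cb | cc | cd | ce | cf | cg | ch | ci | cj.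

Definition all_cells : list cell := [ca; cb; cc; cd; ce; cf; cg; ch; ci; cj].

(* axial coordinates *)
Definition coord (x : cell) : Z * Z :=
  match x with
  | ca => (0, 0) | cb => (0, 1) | cc => (0, 2)
  | cd => (1, -1) | ce => (1, 0) | cf => (1, 1) | cg => (1, 2)
  | ch => (2, -1) | ci => (2, 0) | cj => (2, 1)
  end.

Definition peqb (p q : Z * Z) : bool := (fst p =? fst q) && (snd p =? snd q).
Definition padd (p q : Z * Z) : Z * Z := (fst p + fst q, snd p + snd q).
Definition pscale (n : Z) (p : Z * Z) : Z * Z := (n * fst p, n * snd p).

Definition cell_at (q : Z * Z) : option cell :=
  find (fun x => peqb (coord x) q) all_cells.

Inductive dir := dN | dS | dE | dW | dNW | dSE.
Definition dvec (d : dir) : Z * Z :=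
  match d with
  | dN => (0, 1) | dS => (0, -1) | dE => (1, 0) | dW => (-1, 0)
  | dSE => (1, -1) | dNW => (-1, 1)
  end.
Definition dneg (d : dir) : dir :=
  match d with
  | dN => dS | dS => dN | dE => dW | dW => dE | dSE => dNW | dNW => dSE
  end.
Definition dir_eqb (d e : dir) : bool := peqb (dvec d) (dvec e).

Inductive content := Emp | Blk | Gry.
Definition content_eqb (x y : content) : bool :=
  match x, y with
  | Emp, Emp | Blk, Blk | Gry, Gry => true
  | _, _ => false
  end.
Definition ocontent_eqb (x y : option content) : bool :=
  match x, y with
  | Some x, Some y => content_eqb x y
  | None, None => true
  | _, _ => false
  end.

Definition board := cell -> content.

(* Black = Left, Gray = Right *)
Inductive player := Black | Gray.
Definition opp (p : player) : player := match p with Black => Gray | Gray => Black end.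
Definition own (p : player) : content := match p with Black => Blk | Gray => Gry end.

(* content at a lattice point; None = off the board *)
Definition at_ (s : board) (q : Z * Z) : option content :=
  match cell_at q with Some x => Some (s x) | None => None end.

(* ---------- moves ----------
   A move of k (1..3) own marbles occupying the consecutive cells
   f, f+u, ..., f+(k-1)u of a line, moved one step in direction v.
   mpush = number of opponent marbles pushed (0 if none). *)
Record move := Move { mf : cell; mu : dir; mk : nat; mv : dir; mpush : nat }.

Definition gpos (m : move) (i : nat) : Z * Z :=
  padd (coord (mf m)) (pscale (Z.of_nat i) (dvec (mu m))).

Definition broadside (m : move) : bool :=
  Nat.eqb (mk m) 1 || negb (dir_eqb (mv m) (mu m) || dir_eqb (mv m) (dneg (mu m))).

Definition front (m : move) : Z * Z :=
  if dir_eqb (mv m) (mu m) then gpos m (mk m - 1) else gpos m 0.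

Definition beyond (m : move) (i : nat) : Z * Z :=
  padd (front m) (pscale (Z.of_nat i) (dvec (mv m))).

Definition legal (p : player) (s : board) (m : move) : bool :=
  (1 <=? mk m)%nat && (mk m <=? 3)%nat &&
  forallb (fun i => ocontent_eqb (at_ s (gpos m i)) (Some (own p))) (seq 0 (mk m)) &&
  if broadside m then
    Nat.eqb (mpush m) 0 &&
    forallb (fun i => ocontent_eqb (at_ s (padd (gpos m i) (dvec (mv m)))) (Some Emp))
            (seq 0 (mk m))
  else if Nat.eqb (mpush m) 0 then
    ocontent_eqb (at_ s (beyond m 1)) (Some Emp)
  else
    (mpush m <? mk m)%nat &&
    forallb (fun j => ocontent_eqb (at_ s (beyond m (S j))) (Some (own (opp p))))
            (seq 0 (mpush m)) &&
    match at_ s (beyond m (S (mpush m))) with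
    | None => true
    | Some Emp => true
    | Some _ => false
    end.

Definition moved (m : move) : list (Z * Z) :=
  map (gpos m) (seq 0 (mk m)) ++ map (fun j => beyond m (S j)) (seq 0 (mpush m)).

(* resulting constellation: every moved marble shifts by v; marbles
   leaving the board disappear *)
Definition apply_move (s : board) (m : move) : board :=
  fun x =>
    let q := coord x in
    let q0 := padd q (pscale (-1) (dvec (mv m))) in
    if existsb (peqb q0) (moved m) then
      match at_ s q0 with Some c => c | None => Emp end
    else if existsb (peqb q) (moved m) then Emp
    else s x.

Definition pushes_off (m : move) : bool :=
  existsb (fun q => match cell_at (padd q (dvec (mv m))) with None => true | Some _ => false end)
          (moved m).

(* ---------- forced wins ----------
   fwin w t s : player w can force a push-off in finitely many moves
   from constellation s with player t to move. *)
Inductive fwin (w : player) : player -> board -> Prop :=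
| fw_push : forall s m, legal w s m = true -> pushes_off m = true -> fwin w w s
| fw_step : forall s m, legal w s m = true -> pushes_off m = false ->
    fwin w (opp w) (apply_move s m) -> fwin w w s
| fw_resp : forall s,
    (forall m, legal (opp w) s m = true ->
       pushes_off m = false /\ fwin w w (apply_move s m)) ->
    fwin w (opp w) s.

Definition sym_lr (x : cell) : cell :=
  match x with
  | ca => ch | ch => ca | cb => ci | ci => cb | cc => cj | cj => cc
  | y => y
  end.
Definition sym_tb (x : cell) : cell :=
  match x with
  | ca => cc | cc => ca | cd => cg | cg => cd | ce => cf | cf => ce
  | ch => cj | cj => ch | y => y
  end.
Definition symmetries : list (cell -> cell) :=
  [fun x => x; sym_lr; sym_tb; fun x => sym_lr (sym_tb x)].

Definition iso (s t : board) : Prop :=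
  exists sg, In sg symmetries /\ forall x, t (sg x) = s x.

Definition C1 : board := fun x =>
  match x with cc | cf | cg => Blk | ca | cd | ch => Gry | _ => Emp end.
Definition C2 : board := fun x =>
  match x with cc | cf | cg => Blk | ca | cd | ce => Gry | _ => Emp end.
Definition C3 : board := fun x =>
  match x with cc | cf | cg => Blk | cd | ce | ch => Gry | _ => Emp end.

(* Main.v *)
Require Import Defs.
From Stdlib Require Import ZArith List Bool Lia FunctionalExtensionality.
Import ListNotations.

Definition all_dirs : list dir := [dN; dS; dE; dW; dNW; dSE].

Definition all_moves : list move :=
  flat_map (fun f => flat_map (fun u => flat_map (fun k => flat_map (fun v =>
    map (fun p => Move f u k v p) [0%nat; 1%nat; 2%nat]) all_dirs) [1%nat; 2%nat; 3%nat]) all_dirs) all_cells.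

Lemma in_cells : forall x, In x all_cells.
Proof. destruct x; simpl; tauto. Qed.
Lemma in_dirs : forall x, In x all_dirs.
Proof. destruct x; simpl; tauto. Qed.

Lemma legal_bounds : forall p s m, legal p s m = true ->
  In (mk m) [1%nat; 2%nat; 3%nat] /\ In (mpush m) [0%nat; 1%nat; 2%nat].
Proof.
  intros p s m H. unfold legal in H.
  apply andb_prop in H as [H H3]. apply andb_prop in H as [H _].
  apply andb_prop in H as [H1 H2].
  apply Nat.leb_le in H1. apply Nat.leb_le in H2.
  assert (Hp : (mpush m <= 2)%nat).
  { destruct (broadside m).
    - apply andb_prop in H3 as [H3 _]. apply Nat.eqb_eq in H3. lia.
    - destruct (Nat.eqb (mpush m) 0) eqn:E.
      + apply Nat.eqb_eq in E. lia.
      + apply andb_prop in H3 as [H3 _]. apply andb_prop in H3 as [H3 _].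
        apply Nat.ltb_lt in H3. lia. }
  split.
  - destruct (mk m) as [|[|[|[|k]]]]; simpl; try tauto; lia.
  - destruct (mpush m) as [|[|[|k]]]; simpl; try tauto; lia.
Qed.

Lemma legal_in : forall p s m, legal p s m = true -> In m all_moves.
Proof.
  intros p s m H. apply legal_bounds in H as [Hk Hp].
  destruct m as [f u k v q]; cbn [mk mpush] in Hk, Hp.
  unfold all_moves. apply in_flat_map. exists f. split; [apply in_cells|].
  apply in_flat_map. exists u. split; [apply in_dirs|].
  apply in_flat_map. exists k. split; [assumption|].
  apply in_flat_map. exists v. split; [apply in_dirs|].
  apply in_map_iff. exists q. split; [reflexivity|assumption].
Qed.

Definition enc (s : board) : list content := map s all_cells.

Definition cidx (x : cell) : nat :=
  match x with ca => 0 | cb => 1 | cc => 2 | cd => 3 | ce => 4 | cf => 5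
  | cg => 6 | ch => 7 | ci => 8 | cj => 9 end.
Definition norm (s : board) : board :=
  let l := enc s in fun x => nth (cidx x) l Emp.
Lemma norm_eq : forall s, norm s = s.
Proof. intros s. apply functional_extensionality. intros x. destruct x; reflexivity. Qed.

Fixpoint lc_eqb (l1 l2 : list content) : bool :=
  match l1, l2 with
  | [], [] => true
  | x :: l1, y :: l2 => content_eqb x y && lc_eqb l1 l2
  | _, _ => false
  end.

Definition table : list (list content * move) := [
  ([Emp; Gry; Blk; Emp; Gry; Blk; Blk; Gry; Emp; Emp], Move cf dN 2 dS 1);
  ([Gry; Emp; Blk; Gry; Blk; Blk; Emp; Gry; Emp; Emp], Move ce dN 2 dS 1);
  ([Gry; Gry; Blk; Emp; Blk; Blk; Emp; Gry; Emp; Emp], Move cc dSE 2 dSE 0);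
  ([Emp; Gry; Emp; Gry; Blk; Blk; Emp; Gry; Blk; Emp], Move ce dN 2 dS 1);
  ([Emp; Gry; Gry; Emp; Blk; Blk; Emp; Gry; Blk; Emp], Move cf dSE 2 dNW 1);
  ([Gry; Emp; Gry; Emp; Blk; Blk; Emp; Gry; Blk; Emp], Move ce dE 2 dW 1);
  ([Gry; Gry; Emp; Gry; Blk; Blk; Emp; Emp; Blk; Emp], Move ce dN 2 dS 1);
  ([Emp; Gry; Blk; Gry; Blk; Blk; Emp; Emp; Gry; Emp], Move cc dSE 2 dSE 1);
  ([Emp; Gry; Blk; Gry; Emp; Blk; Blk; Gry; Emp; Emp], Move cf dN 2 dS 0);
  ([Gry; Emp; Blk; Emp; Gry; Blk; Blk; Emp; Gry; Emp], Move cc dSE 2 dSE 1);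
  ([Gry; Emp; Blk; Emp; Gry; Blk; Blk; Gry; Emp; Emp], Move cf dN 2 dS 1);
  ([Emp; Gry; Blk; Gry; Blk; Blk; Emp; Gry; Emp; Emp], Move ce dN 2 dS 1);
  ([Gry; Emp; Blk; Gry; Blk; Blk; Emp; Emp; Gry; Emp], Move cc dSE 2 dSE 1);
  ([Gry; Emp; Blk; Gry; Emp; Blk; Blk; Emp; Gry; Emp], Move cc dSE 2 dSE 1)].

Fixpoint lookup (l : list (list content * move)) (e : list content) : option move :=
  match l with
  | [] => None
  | (k, m) :: l => if lc_eqb k e then Some m else lookup l e
  end.

Fixpoint chkB (n : nat) (s : board) : bool :=
  match n with
  | O => false
  | S n' =>
    match lookup table (enc s) with
    | None => false
    | Some m =>
      if legal Black s m then
      (if pushes_off m then true else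
       let s' := norm (apply_move s m) in
       forallb (fun m' => if legal Gray s' m' then
                  (if pushes_off m' then false else chkB n' (norm (apply_move s' m'))) else true) all_moves)
      else false
    end
  end.

Lemma chkB_sound : forall n s, chkB n s = true -> fwin Black Black s.
Proof.
  induction n as [|n IH]; intros s H; [discriminate|]. cbn [chkB] in H.
  destruct (lookup table (enc s)) as [m|]; [|discriminate].
  destruct (legal Black s m) eqn:Hl; [|discriminate].
  destruct (pushes_off m) eqn:Ep.
  - eapply fw_push; eassumption.
  - rewrite norm_eq in H. eapply fw_step; try eassumption.
    apply fw_resp. intros m' Hl'.
    pose proof (legal_in _ _ _ Hl') as Hin.
    rewrite forallb_forall in H. specialize (H m' Hin).
    change (opp Black) with Gray in Hl'. rewrite Hl' in H.
    destruct (pushes_off m'); [discriminate|].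
    split; [reflexivity|].
    apply IH. rewrite norm_eq in H. exact H.
Qed.

Definition isob (s t : board) : bool :=
  existsb (fun sg => forallb (fun x => content_eqb (t (sg x)) (s x)) all_cells) symmetries.

Lemma isob_iso : forall s t, isob s t = true -> iso s t.
Proof.
  intros s t H. unfold isob in H. apply existsb_exists in H as [sg [Hin H]].
  exists sg. split; [exact Hin|]. intros x.
  rewrite forallb_forall in H. specialize (H x (in_cells x)).
  destruct (t (sg x)), (s x); simpl in H; congruence.
Qed.

Lemma all_check : forallb (fun m => if legal Gray C1 m then
   (if isob (apply_move C1 m) C2 then true else if isob (apply_move C1 m) C3 then true else
   chkB 3 (norm (apply_move C1 m))) else true) all_moves = true.
Proof. vm_compute. reflexivity. Qed.

Theorem lemma5 : forall m : move,
  legal Gray C1 m = true ->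
  ~ iso (apply_move C1 m) C2 ->
  ~ iso (apply_move C1 m) C3 ->
  fwin Black Black (apply_move C1 m).
Proof.
  intros m Hl H2 H3.
  pose proof all_check as H. rewrite forallb_forall in H.
  specialize (H m (legal_in _ _ _ Hl)). rewrite Hl in H.
  destruct (isob (apply_move C1 m) C2) eqn:E2.
  { exfalso. apply H2. apply isob_iso. exact E2. }
  destruct (isob (apply_move C1 m) C3) eqn:E3.
  { exfalso. apply H3. apply isob_iso. exact E3. }
  rewrite norm_eq in H. apply chkB_sound with 3%nat. exact H.
Qed.
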